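(* Let $X$ be a real normed linear space and let $\varepsilon\in[0,2)$. (1) If $X^*$ is $\varepsilon$-smooth, then $X$ is $\varepsilon$-rotund. (2) If $X^*$ is $\varepsilon$-rotund, then $X$ is $\varepsilon$-smooth. (3) If $X$ is reflexive, then $X$ is $\varepsilon$-smooth if and only if $X^*$ is $\varepsilon$-rotund, and $X$ is $\varepsilon$-rotund if and only if $X^*$ is $\varepsilon$-smooth.
   Context: For a normed space $Z$ and $z\in Z\setminus\{\theta\}$, $J(z)=\{\phi\in S_{Z^*}:\phi(z)=\|z\|\}$; $Z$ is $\varepsilon$-smooth if $\operatorname{diam}J(z)=\sup_{\phi,\psi\in J(z)}\|\phi-\psi\|\le\varepsilon$ for every $z\in S_Z$. $Z$ is $\varepsilon$-rotund if for every $\phi\in S_{Z^*}$, $\operatorname{diam}\{z\in S_Z:\phi(z)=1\}\le\varepsilon$. These notions are applied to $X$ and to its dual $X^*$ (whose dual is $X^{**}$). *)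

(* Defs.v *)
(* Dual spaces are realised concretely: the dual of a "space"
   (V, D, N) -- a carrier lmodType V, a subspace D : set V and a norm N on D --
   is ((V -> R^o), dual_set D N, dual_norm D N), i.e. the set of linear
   functionals on D bounded for N, with the operator norm.  This lets us
   iterate: X, X^*, X^** . *)
From HB Require Import structures.
From mathcomp Require Import all_boot all_order all_algebra.
From mathcomp Require Import all_classical all_reals all_analysis.
Set Implicit Arguments. Unset Strict Implicit. Unset Printing Implicit Defensive.
Import Order.TTheory GRing.Theory Num.Theory.
Import numFieldNormedType.Exports.
Local Open Scope classical_set_scope.
Local Open Scope ring_scope.


Definition linear_on {R : realType} {V : lmodType R} (D : set V) (f : V -> R^o) : Prop :=
  forall (a : R) (x y : V), D x -> D y -> f (a *: x + y) = a * f x + f y.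

Definition bounded_on {R : realType} {V : lmodType R} (D : set V) (N : V -> R) (f : V -> R^o) : Prop :=
  exists C : R, forall x, D x -> `|(f x : R)| <= C * N x.

Definition dual_set {R : realType} {V : lmodType R} (D : set V) (N : V -> R) : set (V -> R^o) :=
  [set f | linear_on D f /\ bounded_on D N f].

Definition dual_norm {R : realType} {V : lmodType R} (D : set V) (N : V -> R) (f : V -> R^o) : R :=
  sup [set r | exists x, [/\ D x, N x <= 1 & r = `|(f x : R)|]].

Definition sphere {R : realType} {V : lmodType R} (D : set V) (N : V -> R) : set V := [set z | D z /\ N z = 1].

Definition diam {R : realType} {V : lmodType R} (N : V -> R) (A : set V) : R :=
  sup [set r | exists x y, [/\ A x, A y & r = N (x - y)]].

Definition Jmap {R : realType} {V : lmodType R} (D : set V) (N : V -> R) (z : V) : set (V -> R^o) :=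
  [set phi | sphere (dual_set D N) (dual_norm D N) phi /\ phi z = N z].

Definition eps_smooth {R : realType} {V : lmodType R} (D : set V) (N : V -> R) (eps : R) : Prop :=
  forall z, sphere D N z -> diam (dual_norm D N) (Jmap D N z) <= eps.

Definition eps_rotund {R : realType} {V : lmodType R} (D : set V) (N : V -> R) (eps : R) : Prop :=
  forall phi, sphere (dual_set D N) (dual_norm D N) phi ->
    diam N [set z | sphere D N z /\ phi z = 1] <= eps.

Definition reflexive_space {R : realType} {V : lmodType R} (D : set V) (N : V -> R) : Prop :=
  forall psi, dual_set (dual_set D N) (dual_norm D N) psi ->
    exists2 x, D x & forall phi, dual_set D N phi -> psi phi = phi x.


Definition Xdual_set (R : realType) (X : normedModType R) : set (X -> R^o) :=
  dual_set [set: X] (fun x : X => `|x|).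
Definition Xdual_norm (R : realType) (X : normedModType R) : (X -> R^o) -> R :=
  dual_norm [set: X] (fun x : X => `|x|).
Arguments Xdual_set {R} X.
Arguments Xdual_norm {R} X.

(* Main.v *)
Require Import Defs.
From HB Require Import structures.
From mathcomp Require Import all_boot all_order all_algebra.
From mathcomp Require Import all_classical all_reals all_analysis.
From mathcomp Require Import ring lra.
Import Order.TTheory GRing.Theory Num.Theory.
Import numFieldNormedType.Exports.
Local Open Scope classical_set_scope.
Local Open Scope ring_scope.

Section SupGen.
Variable R : realType.

Lemma sup_le_gen (E : set R) (M : R) :
  (forall r, E r -> r <= M) -> 0 <= M -> sup E <= M.
Proof.
move=> hE hM; have [[r Er]|E0] := pselect (exists r, E r).
  by apply: ge_sup; [exists r | move=> s /hE].
have -> : E = set0 by apply/seteqP; split=> // s Es; apply: E0; exists s.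
by rewrite sup0.
Qed.

Lemma sup_ge_gen (E : set R) (M r : R) :
  (forall r, E r -> r <= M) -> E r -> r <= sup E.
Proof.
move=> hE Er; apply: sup_upper_bound => //; split; first by exists r.
by exists M => s /hE.
Qed.

End SupGen.

Section Generic.
Variables (R : realType) (V : lmodType R) (D : set V) (N : V -> R).

Definition SP := [/\ D 0, (forall a x y, D x -> D y -> D (a *: x + y)),
  (forall x, D x -> 0 <= N x) & (forall a x, D x -> N (a *: x) = `|a| * N x)].

Lemma SP_DZ : SP -> forall a x, D x -> D (a *: x).
Proof. by case=> D0 Dl _ _ a x Dx; rewrite -[_ *: x]addr0; apply: Dl. Qed.

Lemma SP_N0 : SP -> N 0 = 0.
Proof. by case=> D0 _ _ NZ; rewrite -(scale0r (0 : V)) NZ // normr0 mul0r. Qed.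

Section Fun.
Variable f : V -> R^o.
Hypothesis fl : linear_on D f.

Lemma lin0 : D 0 -> f 0 = 0.
Proof.
move=> D0; have := fl 1 0 0 D0 D0; rewrite scale1r addr0 mul1r => h.
have : f 0 + f 0 - f 0 = f 0 - f 0 by rewrite -h.
by rewrite addrK subrr.
Qed.

Lemma linZ : D 0 -> forall a x, D x -> f (a *: x) = a * f x.
Proof.
move=> D0 a x Dx; have := fl a x 0 Dx D0; rewrite addr0 => ->.
by rewrite lin0 // addr0.
Qed.

Lemma linB : forall x y, D x -> D y -> f (x - y) = f x - f y.
Proof.
move=> x y Dx Dy; have := fl (-1) y x Dy Dx; rewrite scaleN1r addrC => ->.
by rewrite mulN1r addrC.
Qed.
End Fun.

Lemma dn_leP (f : V -> R^o) M :
  (forall x, D x -> N x <= 1 -> `|f x| <= M) -> 0 <= M -> dual_norm D N f <= M.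
Proof.
move=> h hM; apply: sup_le_gen => // r [x [Dx Nx ->]]; exact: h.
Qed.

Lemma dn_ge (f : V -> R^o) M x :
  (forall x, D x -> N x <= 1 -> `|f x| <= M) -> D x -> N x <= 1 ->
  `|f x| <= dual_norm D N f.
Proof.
move=> h Dx Nx; apply: (@sup_ge_gen _ _ M).
  by move=> r [y [Dy Ny ->]]; exact: h.
by exists x.
Qed.

Lemma dn_le (f : V -> R^o) x : SP -> dual_set D N f -> D x ->
  `|f x| <= dual_norm D N f * N x.
Proof.
move=> sp [fl [C hC]] Dx; have [D0 Dl Nge0 NZ] := sp.
have hb : forall y, D y -> N y <= 1 -> `|f y| <= `|C|.
  move=> y Dy Ny; apply: (le_trans (hC y Dy)).
  apply: (le_trans (ler_wpM2r (Nge0 y Dy) (ler_norm C))).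
  by rewrite -[X in _ <= X]mulr1; apply: ler_wpM2l.
have [Nx0|Nxp] := eqVneq (N x) 0.
  by have := hC x Dx; rewrite Nx0 !mulr0.
have Nxgt : 0 < N x by rewrite lt0r Nxp Nge0.
pose y := (N x)^-1 *: x.
have Dy : D y by apply: SP_DZ.
have Ninv : 0 <= (N x)^-1 by rewrite invr_ge0 ltW.
have Ny : N y = 1 by rewrite /y NZ // ger0_norm // mulVf.
have := @dn_ge f _ y hb Dy; rewrite Ny lexx => /(_ isT).
rewrite /y (@linZ f fl) // normrM ger0_norm // mulrC => h.
by rewrite -ler_pdivrMr.
Qed.

Lemma ds_bound (f : V -> R^o) : SP -> dual_set D N f ->
  exists M, forall y, D y -> N y <= 1 -> `|f y| <= M.
Proof.
move=> [_ _ Nge0 _] [fl [C hC]]; exists `|C| => y Dy Ny.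
apply: (le_trans (hC y Dy)).
apply: (le_trans (ler_wpM2r (Nge0 y Dy) (ler_norm C))).
by rewrite -[X in _ <= X]mulr1; apply: ler_wpM2l.
Qed.

Lemma dn_ge0 (f : V -> R^o) : SP -> dual_set D N f -> 0 <= dual_norm D N f.
Proof.
move=> sp fd; have [D0 _ _ _] := sp; have [M hM] := @ds_bound f sp fd.
apply: le_trans (normr_ge0 (f 0)) _; apply: (@dn_ge f M 0 hM D0).
by rewrite (SP_N0 sp) ler01.
Qed.

Lemma dn_leM (f : V -> R^o) M : SP -> 0 <= M ->
  (forall x, D x -> `|f x| <= M * N x) -> dual_norm D N f <= M.
Proof.
move=> [_ _ Nge0 _] hM h; apply: dn_leP => // x Dx Nx.
by apply: (le_trans (h x Dx)); rewrite -[X in _ <= X]mulr1 ler_wpM2l.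
Qed.

Lemma fevE (f g : V -> R^o) a x : (a *: f + g) x = a * f x + g x.
Proof. by []. Qed.

Lemma fZE (f : V -> R^o) a x : (a *: f) x = a * (f x : R).
Proof. by []. Qed.

Lemma fBE (f g : V -> R^o) x : (f - g) x = (f x : R) - g x.
Proof. by []. Qed.

Lemma ds_lin (f g : V -> R^o) a : dual_set D N f -> dual_set D N g ->
  dual_set D N (a *: f + g).
Proof.
move=> [fl [C hC]] [gl [C' hC']]; split.
  move=> b x y Dx Dy; rewrite !fevE fl // gl //; lra.
exists (`|a| * C + C') => x Dx; rewrite fevE.
have h1 := hC x Dx; have h2 := hC' x Dx.
have h3 := ler_normD (a * (f x : R)) (g x : R).
have h4 : `|a * (f x : R)| <= `|a| * (C * N x) by rewrite normrM ler_wpM2l.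
apply: (le_trans h3); rewrite mulrDl -mulrA; exact: lerD.
Qed.

Lemma ds0 : dual_set D N (0 : V -> R^o).
Proof.
split; first by move=> a x y _ _ /=; rewrite mulr0 addr0.
by exists 0 => x _ /=; rewrite normr0 mul0r.
Qed.

Lemma dnZ (f : V -> R^o) a : SP -> dual_set D N f ->
  dual_norm D N (a *: f) = `|a| * dual_norm D N f.
Proof.
move=> sp fd.
have fad : dual_set D N (a *: f) by rewrite -[_ *: f]addr0; apply: ds_lin => //; exact: ds0.
have le1 : forall b (g : V -> R^o), dual_set D N g -> dual_norm D N (b *: g) <= `|b| * dual_norm D N g.
  move=> b g gd; apply: dn_leM => //; first by rewrite mulr_ge0 // dn_ge0.
  by move=> x Dx; rewrite fZE normrM -mulrA ler_wpM2l // dn_le.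
apply/eqP; rewrite eq_le le1 //=.
have [a0|a0] := eqVneq a 0; first by rewrite a0 normr0 mul0r; apply: dn_ge0 => //; rewrite -a0.
have := le1 a^-1 _ fad; rewrite scalerA mulVf // scale1r normrV ?unitfE //.
move=> h; have := ler_wpM2l (normr_ge0 a) h; by rewrite mulrA mulfV ?normr_eq0 // mul1r.
Qed.

Lemma dnB (f g : V -> R^o) : SP -> dual_set D N f -> dual_set D N g ->
  dual_norm D N (f - g) <= dual_norm D N f + dual_norm D N g.
Proof.
move=> sp fd gd; apply: dn_leM => //; first by rewrite addr_ge0 // dn_ge0.
move=> x Dx; rewrite fBE; apply: (le_trans (ler_normB _ _)).
by rewrite mulrDl lerD // dn_le.
Qed.

End Generic.
Arguments SP {R V}.
Arguments SP_DZ {R V D N}.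
Arguments SP_N0 {R V D N}.
Arguments lin0 {R V D f}.
Arguments linZ {R V D f}.
Arguments linB {R V D f}.
Arguments dn_leP {R V D N f M}.
Arguments dn_ge {R V D N f M x}.
Arguments dn_le {R V D N f x}.
Arguments ds_bound {R V D N f}.
Arguments dn_ge0 {R V D N f}.
Arguments dn_leM {R V D N f M}.
Arguments fevE {R V}.
Arguments fZE {R V}.
Arguments fBE {R V}.
Arguments ds_lin {R V D N f g a}.
Arguments ds0 {R V D N}.
Arguments dnZ {R V D N f a}.
Arguments dnB {R V D N f g}.

Section Generic2.
Variables (R : realType) (V : lmodType R) (D : set V) (N : V -> R).
Lemma SP_dual : SP D N -> SP (dual_set D N) (dual_norm D N).
Proof.
move=> sp; split.
- exact: ds0.
- by move=> a f g fd gd; apply: ds_lin.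
- by move=> f fd; apply: dn_ge0.
- by move=> a f fd; apply: dnZ.
Qed.

Definition ev (x : V) : (V -> R^o) -> R^o := fun f => f x.

Lemma ev_ds x : SP D N -> D x -> dual_set (dual_set D N) (dual_norm D N) (ev x).
Proof.
move=> sp Dx; split; first by move=> a f g _ _.
by exists (N x) => f fd; rewrite /ev mulrC dn_le.
Qed.

Lemma ev_le x : SP D N -> D x -> dual_norm (dual_set D N) (dual_norm D N) (ev x) <= N x.
Proof.
move=> sp Dx; apply: dn_leP; last by case: sp => _ _ + _; apply.
move=> f fd nf; apply: (le_trans (dn_le sp fd Dx)).
by rewrite -[X in _ <= X]mul1r ler_wpM2r //; case: sp => _ _ + _; apply.
Qed.

Lemma ev_ge x f : SP D N -> D x -> dual_set D N f -> dual_norm D N f <= 1 ->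
  `|f x| <= dual_norm (dual_set D N) (dual_norm D N) (ev x).
Proof.
move=> sp Dx fd nf; apply: (@dn_ge _ _ _ _ _ (N x)) => // g gd ng.
apply: (le_trans (dn_le sp gd Dx)).
by rewrite -[X in _ <= X]mul1r ler_wpM2r //; case: sp => _ _ + _; apply.
Qed.

Lemma dsB (f g : V -> R^o) : dual_set D N f -> dual_set D N g ->
  dual_set D N (f - g).
Proof.
move=> fd gd; rewrite (_ : f - g = (-1) *: g + f); first exact: ds_lin.
by rewrite scaleN1r addrC.
Qed.

End Generic2.
Arguments ev {R V}.
Arguments ev_ds {R V D N x}.
Arguments ev_le {R V D N x}.
Arguments ev_ge {R V D N x f}.
Arguments SP_dual {R V D N}.
Arguments dsB {R V D N f g}.

Section Diam.
Variables (R : realType) (V : lmodType R) (N : V -> R).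

Lemma dm_le (A : set V) e : 0 <= e ->
  (forall x y, A x -> A y -> N (x - y) <= e) -> diam N A <= e.
Proof. by move=> he h; apply: sup_le_gen => // r [x [y [Ax Ay ->]]]; apply: h. Qed.

Lemma dm_ge (A : set V) M x y :
  (forall x y, A x -> A y -> N (x - y) <= M) -> A x -> A y -> N (x - y) <= diam N A.
Proof.
move=> h Ax Ay; apply: (@sup_ge_gen _ _ M); last by exists x, y.
by move=> r [u [v [Au Av ->]]]; apply: h.
Qed.
End Diam.
Arguments dm_le {R V N A e}.
Arguments dm_ge {R V N A M x y}.

Section HahnB.
Variables (R : realType) (X : normedModType R) (x0 : X).

Definition lin_g (G : set (X * R)) := forall a x y u v,
  G (x, u) -> G (y, v) -> G (a *: x + y, a * u + v).
Definition fun_g (G : set (X * R)) := forall x u v, G (x, u) -> G (x, v) -> u = v.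
Definition dom_g (G : set (X * R)) := forall x u, G (x, u) -> u <= `|x|.
Definition PG (G : set (X * R)) :=
  [/\ lin_g G, fun_g G, dom_g G & forall p, G p -> G (x0, `|x0|)].

Lemma PG_chain (F : set (set (X * R))) : F `<=` PG -> total_on F subset ->
  PG (\bigcup_(G in F) G).
Proof.
move=> FP tot; split.
- move=> a x y u v [G1 FG1 G1xu] [G2 FG2 G2yv].
  have [s12|s21] := tot _ _ FG1 FG2.
    by exists G2 => //; have [l _ _ _] := FP _ FG2; apply: l => //; apply: s12.
  by exists G1 => //; have [l _ _ _] := FP _ FG1; apply: l => //; apply: s21.
- move=> x u v [G1 FG1 G1xu] [G2 FG2 G2yv].
  have [s12|s21] := tot _ _ FG1 FG2.
    by have [_ f _ _] := FP _ FG2; exact: (f x u v (s12 _ G1xu) G2yv).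
  by have [_ f _ _] := FP _ FG1; exact: (f x u v G1xu (s21 _ G2yv)).
- by move=> x u [G FG Gxu]; have [_ _ d _] := FP _ FG; apply: d.
- by move=> p [G FG Gp]; exists G => //; have [_ _ _ h] := FP _ FG; apply: h Gp.
Qed.

Definition Lg : set (X * R) := [set p | exists t, p = (t *: x0, t * `|x0|)].

Lemma PG_Lg : PG Lg.
Proof.
split.
- move=> a x y u v [t [-> ->]] [s [-> ->]]; exists (a * t + s).
  by rewrite scalerA -scalerDl mulrA -mulrDl.
- move=> x u v [t [-> ->]] [s [e ->]].
  have [x00|x0n] := eqVneq x0 0; first by rewrite x00 normr0 !mulr0.
  have : (t - s) *: x0 = 0 by rewrite scalerBl e subrr.
  by move/eqP; rewrite scaler_eq0 (negbTE x0n) orbF subr_eq0 => /eqP ->.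
- move=> x u [t [-> ->]]; rewrite normrZ ler_wpM2r //; exact: ler_norm.
- by move=> p _; exists 1; rewrite scale1r mul1r.
Qed.

Lemma hb_exists : exists f : X -> R,
  [/\ (forall a x y, f (a *: x + y) = a * f x + f y),
      (forall x, `|f x| <= `|x|) & f x0 = `|x0|].
Proof.
have [A [PA Amax]] := Zorn_bigcup PG_chain.
have [Al Af Ad Ax0] := PA.
have Ane : exists p, A p.
  apply: contrapT => Ae; apply: (Amax Lg) PG_Lg; split.
    by move=> p Ap; exfalso; apply: Ae; exists p.
  by move=> LA; apply: Ae; exists (x0, `|x0|); apply: LA; exists 1; rewrite scale1r mul1r.
have A0 : A (x0, `|x0|) by case: Ane => p /Ax0.
have A00 : A (0, 0).
  by have := Al (-1) _ _ _ _ A0 A0; rewrite scaleN1r addNr mulN1r addNr.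
have tot : forall y, exists v, A (y, v).
  move=> y; apply: contrapT => ny.
  pose Ls := [set r | exists x u, A (x, u) /\ r = u - `|x - y|].
  have ub : forall x' u', A (x', u') -> forall r, Ls r -> r <= `|x' + y| - u'.
    move=> x' u' Ax' r [x [u [Axu ->]]].
    have := Ad _ _ (Al 1 _ _ _ _ Axu Ax'); rewrite scale1r mul1r => h.
    have : `|x + x'| <= `|x - y| + `|x' + y|.
      have ex : (x - y) + (x' + y) = x + x' by rewrite addrACA addNr addr0.
      by rewrite -ex; exact: ler_normD.
    lra.
  pose c := sup Ls.
  have Lsne : Ls !=set0 by exists (0 - `|0 - y|); exists 0, 0.
  have hs : has_sup Ls by split => //; exists (`|0 + y| - 0) => r /ub; apply.
  have c1 : forall x u, A (x, u) -> u - `|x - y| <= c.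
    by move=> x u Axu; apply: sup_upper_bound => //; exists x, u.
  have c2 : forall x u, A (x, u) -> c <= `|x + y| - u.
    by move=> x u Axu; apply: ge_sup => // r /(ub _ _ Axu).
  pose B : set (X * R) := [set p | exists x u t, A (x, u) /\ p = (x + t *: y, u + t * c)].
  have PB : PG B.
    split.
    - move=> a x y' u v [x1 [u1 [t1 [A1 e1]]]] [x2 [u2 [t2 [A2 e2]]]].
      case: e1 => -> ->; case: e2 => -> ->.
      exists (a *: x1 + x2), (a * u1 + u2), (a * t1 + t2); split; first exact: Al.
      congr pair; first by rewrite scalerDr scalerA scalerDl addrACA.
      ring.
    - move=> x u v [x1 [u1 [t1 [A1 e1]]]] [x2 [u2 [t2 [A2 e2]]]].
      case: e1 => ex ->; case: e2 => ex2 ->.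
      have e : x1 + t1 *: y = x2 + t2 *: y by rewrite -ex -ex2.
      have [t12|t12] := eqVneq t1 t2.
        rewrite -t12 in e *; have x12 : x1 = x2 by apply: (addIr (t1 *: y)).
        by rewrite x12 in A1; rewrite (Af _ _ _ A1 A2).
      exfalso; apply: ny.
      have : (x2 - x1) + (t2 *: y - t1 *: y) = 0.
        by rewrite addrACA -opprD -e subrr.
      move/eqP; rewrite addr_eq0 => /eqP h.
      have yE : (t1 - t2)^-1 *: ((-1) *: x1 + x2) + 0 = y.
        rewrite addr0 scaleN1r (addrC (- x1)) h opprB -scalerBl scalerA mulVf ?scale1r //.
        by rewrite subr_eq0.
      by rewrite -yE; eexists; exact: (Al _ _ _ _ _ (Al _ _ _ _ _ A1 A2) A00).
    - move=> x u [x1 [u1 [t [A1 e]]]]; case: e => -> ->.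
      have [t0|tn] := eqVneq t 0.
        by rewrite t0 scale0r mul0r !addr0; apply: Ad.
      pose w := t^-1 *: x1 + y.
      have hx : x1 + t *: y = t *: w by rewrite /w scalerDr scalerA mulfV ?scale1r.
      rewrite hx normrZ.
      have [tp|tn'] := ltrP 0 t.
        have := c2 _ _ (Al t^-1 _ _ _ _ A1 A00); rewrite !addr0 -/w => h.
        have := ler_wpM2l (ltW tp) h; rewrite mulrBr mulrA mulfV // mul1r.
        rewrite gtr0_norm //; lra.
      have tlt : t < 0 by rewrite lt_neqAle tn tn'.
      have := c1 _ _ (Al (- t^-1) _ _ _ _ A1 A00); rewrite !addr0.
      rewrite scaleNr -opprD normrN -/w => h.
      have tp : 0 <= - t by rewrite oppr_ge0 ltW.
      have := ler_wpM2l tp h; rewrite mulrBr mulrA mulrNN mulfV // mul1r !mulNr.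
      rewrite ltr0_norm //; lra.
    - by move=> p _; exists x0, `|x0|, 0; rewrite scale0r mul0r !addr0.
  apply: (Amax B) PB; split.
    by move=> [x u] Axu; exists x, u, 0; rewrite scale0r mul0r !addr0.
  move=> BA; apply: ny; exists c; apply: BA; exists 0, 0, 1; split => //.
  by rewrite add0r scale1r mul1r add0r.
have [f hf] := choice tot.
exists f; split.
- by move=> a x y; apply: (Af (a *: x + y)); [exact: hf | exact: Al].
- move=> x; rewrite ler_norml; apply/andP; split; last exact: Ad _ _ (hf x).
  have := Ad _ _ (Al (-1) _ _ _ _ (hf x) A00).
  rewrite !addr0 scaleN1r normrN mulN1r => h; lra.
- exact: Af _ _ _ (hf x0) A0.
Qed.
End HahnB.

Section Main.
Variables (R : realType) (X : normedModType R).
Local Notation NX := (fun x : X => `|x|).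
Local Notation Xd := (dual_set [set: X] (fun x : X => `|x|)).
Local Notation nd := (dual_norm [set: X] (fun x : X => `|x|)).
Local Notation nd2 := (dual_norm Xd nd).

Lemma sp1 : SP [set: X] NX.
Proof.
split.
- by [].
- by [].
- by move=> x _; exact: normr_ge0.
- by move=> a x _; exact: normrZ.
Qed.

Lemma sp2 : SP Xd nd.
Proof. exact: SP_dual sp1. Qed.

Lemma hbX (x : X) : exists f, [/\ Xd f, nd f <= 1 & f x = `|x|].
Proof.
have [f [fl fb fx]] := @hb_exists R X x.
have fd : Xd f.
  split; first by move=> a u v _ _; exact: fl.
  by exists 1 => u _; rewrite mul1r; exact: fb.
exists f; split => //; apply: (dn_leM sp1) => // u _; rewrite mul1r; exact: fb.
Qed.

Lemma ev_sphere (x : X) (phi : X -> R^o) : NX x = 1 -> Xd phi -> nd phi = 1 ->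
  phi x = 1 -> sphere (dual_set Xd nd) nd2 (ev x).
Proof.
move=> nx phid nphi phix; split; first exact: (ev_ds sp1).
apply/eqP; rewrite eq_le; apply/andP; split.
  by rewrite -nx; apply: (ev_le sp1).
have := ev_ge (x := x) sp1 _ phid; rewrite nphi phix normr1; apply => //.
Qed.

Lemma sphere2_bound (A : set ((X -> R^o) -> R^o)) :
  A `<=` sphere (dual_set Xd nd) nd2 ->
  forall P Q, A P -> A Q -> nd2 (P - Q) <= 2.
Proof.
move=> sA P Q /sA [Pd nP] /sA [Qd nQ].
by have := dnB sp2 Pd Qd; rewrite nP nQ.
Qed.

Lemma part1 (eps : R) : 0 <= eps ->
  eps_smooth Xd nd eps -> eps_rotund [set: X] NX eps.
Proof.
move=> he H phi [phid nphi]; apply: dm_le => // x y [[_ nx] phix] [[_ ny] phiy].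
have [f [fd nf fw]] := hbX (x - y).
have Jx : Jmap Xd nd phi (ev x).
  by split; [exact: (@ev_sphere x phi nx phid nphi phix) | rewrite /ev phix nphi].
have Jy : Jmap Xd nd phi (ev y).
  by split; [exact: (@ev_sphere y phi ny phid nphi phiy) | rewrite /ev phiy nphi].
have := H phi (conj phid nphi) => Hd.
apply: le_trans Hd.
have hb : forall P Q, Jmap Xd nd phi P -> Jmap Xd nd phi Q -> nd2 (P - Q) <= 2.
  by apply: sphere2_bound => P [].
apply: le_trans (dm_ge hb Jx Jy).
have exyd : dual_set Xd nd (ev x - ev y) by apply: dsB; apply: (ev_ds sp1).
have := dn_le sp2 exyd fd.
rewrite fBE /ev.
have -> : (f x : R) - f y = `|x - y|.
  by rewrite -fw; case: fd => fl _; rewrite (linB fl).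
move=> h; apply: le_trans (ler_norm _) (le_trans h _).
rewrite -[X in _ <= X]mulr1; apply: ler_wpM2l => //.
exact: (dn_ge0 sp2 exyd).
Qed.

Lemma part2 (eps : R) : 0 <= eps ->
  eps_rotund Xd nd eps -> eps_smooth [set: X] NX eps.
Proof.
move=> he H z [_ nz].
have [[phi0 [[phid nphi] phiz]]|J0] := pselect (exists phi, Jmap [set: X] NX z phi); last first.
  by apply: dm_le => // P Q JP; exfalso; apply: J0; exists P.
rewrite nz in phiz.
have Hs := @ev_sphere z phi0 nz phid nphi phiz.
have := H _ Hs; rewrite /Jmap nz; exact.
Qed.

Lemma refl_norm (Phi : (X -> R^o) -> R^o) : reflexive_space [set: X] NX ->
  sphere (dual_set Xd nd) nd2 Phi ->
  exists x, NX x = 1 /\ forall phi, Xd phi -> Phi phi = phi x.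
Proof.
move=> Hr [Phid nPhi]; have [x _ hx] := Hr Phi Phid.
exists x; split => //.
apply/eqP; rewrite eq_le; apply/andP; split.
  have [f [fd nf fx]] := hbX x.
  rewrite /NX -fx -hx //; apply: le_trans (ler_norm _) _.
  apply: le_trans (dn_le sp2 Phid fd) _; rewrite nPhi mul1r //.
rewrite -nPhi; apply: dn_leP => [phi phid nphi|]; last exact: normr_ge0.
rewrite hx //; apply: le_trans (dn_le sp1 phid (I : [set: X] x)) _.
by rewrite -[X in _ <= X]mul1r ler_wpM2r.
Qed.

Lemma part3a (eps : R) : 0 <= eps -> reflexive_space [set: X] NX ->
  eps_smooth [set: X] NX eps -> eps_rotund Xd nd eps.
Proof.
move=> he Hr Hs Phi sPhi.
have [x [nx hx]] := @refl_norm Phi Hr sPhi.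
have := Hs x (conj I nx).
rewrite (_ : Jmap [set: X] NX x = [set phi | sphere Xd nd phi /\ Phi phi = 1]) //.
apply/seteqP; split => phi [[phid nphi] e]; split => //.
  by rewrite hx // e nx.
by rewrite nx -e hx.
Qed.

Lemma part3b (eps : R) : 0 <= eps -> reflexive_space [set: X] NX ->
  eps_rotund [set: X] NX eps -> eps_smooth Xd nd eps.
Proof.
move=> he Hr Hrot phi [phid nphi]; apply: dm_le => // P Q [sP eP] [sQ eQ].
have [x [nx hx]] := @refl_norm P Hr sP.
have [y [ny hy]] := @refl_norm Q Hr sQ.
have phix : phi x = 1 by rewrite -hx // eP nphi.
have phiy : phi y = 1 by rewrite -hy // eQ nphi.
have Fx : [set z | sphere [set: X] NX z /\ phi z = 1] x by [].
have Fy : [set z | sphere [set: X] NX z /\ phi z = 1] y by [].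
apply: le_trans (Hrot phi (conj phid nphi)).
have hb : forall u v, [set z | sphere [set: X] NX z /\ phi z = 1] u ->
    [set z | sphere [set: X] NX z /\ phi z = 1] v -> NX (u - v) <= 2.
  move=> u v [[_ nu] _] [[_ nv] _]; apply: le_trans (ler_normB _ _) _.
  by rewrite /NX in nu nv; rewrite nu nv.
apply: le_trans (dm_ge hb Fx Fy).
apply: dn_leP => [g gd ng|]; last exact: normr_ge0.
rewrite fBE hx // hy //.
case: (gd) => gl _; rewrite -(linB gl) //.
apply: le_trans (dn_le sp1 gd (I : [set: X] (x - y))) _.
by rewrite -[X in _ <= X]mul1r ler_wpM2r.
Qed.

End Main.

Theorem theorem2p13 (R : realType) (X : normedModType R) (eps : R)
  (heps0 : 0 <= eps) (heps2 : eps < 2) :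
  let NX := fun x : X => `|x| in
  [/\ (eps_smooth (Xdual_set X) (Xdual_norm X) eps -> eps_rotund [set: X] NX eps),
      (eps_rotund (Xdual_set X) (Xdual_norm X) eps -> eps_smooth [set: X] NX eps) &
      (reflexive_space [set: X] NX ->
         (eps_smooth [set: X] NX eps <-> eps_rotund (Xdual_set X) (Xdual_norm X) eps) /\
         (eps_rotund [set: X] NX eps <-> eps_smooth (Xdual_set X) (Xdual_norm X) eps))].
Proof.
move=> NX; split.
- exact: part1.
- exact: part2.
- move=> Hr; split; split.
  + exact: part3a.
  + exact: part2.
  + exact: part3b.
  + exact: part1.
Qed.
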